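(* Let $\beta\colon Y\times Y\to[0,\infty)$ be arbitrary and define the interface velocity $V_{\mathrm{int}}=\{\{v\}\}-\beta[\![p]\!]$. For the semi-discretization described below, choose $$f^\rho=\Big(\{\{\rho\}\}_{\log}-\tfrac12[\![\rho]\!]\operatorname{sign}(V_{\mathrm{int}})\Big)V_{\mathrm{int}},\qquad f^{\rho e}=\frac{1}{\gamma-1}\frac{f^\rho}{\{\{\rho/p\}\}_{\log}}+\{\{p\}\}V_{\mathrm{int}},\qquad v^{\mathrm{num}}=V_{\mathrm{int}},$$ $f^{\rho v}$ any consistent two-point discretization of $\rho v^2+p$, and $\rho^{\mathrm{num}}$ any consistent two-point mean of $\rho$. Then the semi-discretization is entropy-stable for the entropy pair $U=-\rho s$, $F=-\rho sv$, $s=\log(p/\rho^\gamma)$.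
   Context: Let $\gamma>1$. $Y$ is the set of states $(\rho,\rho v,\rho e)$ with $\rho>0$, $p=(\gamma-1)\rho e>0$, $v=\rho v/\rho$; a time-independent gravity potential $\phi_i$ is attached to each cell. The scheme is $\partial_t\rho_i+\frac{f^\rho_{i+1/2}-f^\rho_{i-1/2}}{\Delta x}=0$, $\partial_t(\rho v)_i+\frac{f^{\rho v}_{i+1/2}-f^{\rho v}_{i-1/2}}{\Delta x}+\frac{\rho^{\mathrm{num}}_{i+1/2}[\![\phi]\!]_{i+1/2}+\rho^{\mathrm{num}}_{i-1/2}[\![\phi]\!]_{i-1/2}}{2\Delta x}=0$, $\partial_t(\rho e)_i+\frac{f^{\rho e}_{i+1/2}-f^{\rho e}_{i-1/2}}{\Delta x}-\frac{v^{\mathrm{num}}_{i+1/2}[\![p]\!]_{i+1/2}+v^{\mathrm{num}}_{i-1/2}[\![p]\!]_{i-1/2}}{2\Delta x}=0$, with subscript $i+1/2$ meaning evaluation at $(u_-,u_+)=(u_i,u_{i+1})$. Notation: $\{\{a\}\}=\tfrac12(a_-+a_+)$, $[\![a]\!]=a_+-a_-$, logarithmic mean $\{\{a\}\}_{\log}=[\![a]\!]/[\![\log a]\!]$ if $a_-\ne a_+$, $=a_-$ otherwise. Entropy-stable for $(U,F)$ means: there exists a two-point $F^{\mathrm{num}}$ with $F^{\mathrm{num}}(u,u)=F(u)$ such that for all grid states and all $i$, $U'(u_i)\cdot\partial_tu_i\le-\frac{1}{\Delta x}(F^{\mathrm{num}}(u_i,u_{i+1})-F^{\mathrm{num}}(u_{i-1},u_i))$,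 with $U'$ the gradient with respect to $(\rho,\rho v,\rho e)$. *)

(* Defs.v *)
From Stdlib Require Import Reals ZArith.
Open Scope R_scope.

(* A state (rho, rho v, rho e) of the conserved variables. *)
Record state := mkst { rho : R; mom : R; ener : R }.

Definition vel (u : state) : R := mom u / rho u.
Definition pres (gamma : R) (u : state) : R := (gamma - 1) * ener u.

Definition inY (gamma : R) (u : state) : Prop :=
  0 < rho u /\ 0 < pres gamma u.

(* two-point operators, (um, up) = (u_-, u_+) *)
Definition avg (a b : R) : R := (a + b) / 2.
Definition jump (a b : R) : R := b - a.
Definition logmean (a b : R) : R :=
  if Req_EM_T a b then a else (b - a) / (ln b - ln a).
Definition sgn (x : R) : R :=
  if Rlt_dec 0 x then 1 else if Rlt_dec x 0 then -1 else 0.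

Definition Vint gamma (beta : state -> state -> R) (um up : state) : R :=
  avg (vel um) (vel up) - beta um up * jump (pres gamma um) (pres gamma up).

Definition frho gamma beta (um up : state) : R :=
  (logmean (rho um) (rho up) - / 2 * jump (rho um) (rho up) * sgn (Vint gamma beta um up))
  * Vint gamma beta um up.

Definition fener gamma beta (um up : state) : R :=
  / (gamma - 1) * (frho gamma beta um up /
     logmean (rho um / pres gamma um) (rho up / pres gamma up))
  + avg (pres gamma um) (pres gamma up) * Vint gamma beta um up.

Definition vnum gamma beta (um up : state) : R := Vint gamma beta um up.

(* Time derivatives of the semi-discretization at cell i;
   u : grid states indexed by Z, phi : gravity potential, dx : mesh size,
   frv : momentum flux, rnum : density mean. *)
Section Scheme.
Variables (gamma : R) (beta frv rnum : state -> state -> R)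
          (u : Z -> state) (phi : Z -> R) (dx : R).

Definition dt_rho (i : Z) : R :=
  - (frho gamma beta (u i) (u (i+1)%Z) - frho gamma beta (u (i-1)%Z) (u i)) / dx.

Definition dt_mom (i : Z) : R :=
  - (frv (u i) (u (i+1)%Z) - frv (u (i-1)%Z) (u i)) / dx
  - (rnum (u i) (u (i+1)%Z) * jump (phi i) (phi (i+1)%Z)
     + rnum (u (i-1)%Z) (u i) * jump (phi (i-1)%Z) (phi i)) / (2 * dx).

Definition dt_ener (i : Z) : R :=
  - (fener gamma beta (u i) (u (i+1)%Z) - fener gamma beta (u (i-1)%Z) (u i)) / dx
  + (vnum gamma beta (u i) (u (i+1)%Z) * jump (pres gamma (u i)) (pres gamma (u (i+1)%Z))
     + vnum gamma beta (u (i-1)%Z) (u i) * jump (pres gamma (u (i-1)%Z)) (pres gamma (u i)))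
    / (2 * dx).
End Scheme.

Definition spec_ent gamma (u : state) : R := ln (pres gamma u / Rpower (rho u) gamma).
Definition Uent gamma (u : state) : R := - rho u * spec_ent gamma u.
Definition Fent gamma (u : state) : R := - rho u * spec_ent gamma u * vel u.

Definition is_gradU gamma (dU0 dU1 dU2 : state -> R) : Prop :=
  forall u, inY gamma u ->
    derivable_pt_lim (fun x => Uent gamma (mkst x (mom u) (ener u))) (rho u) (dU0 u) /\
    derivable_pt_lim (fun x => Uent gamma (mkst (rho u) x (ener u))) (mom u) (dU1 u) /\
    derivable_pt_lim (fun x => Uent gamma (mkst (rho u) (mom u) x)) (ener u) (dU2 u).

(* Main.v *)
Require Import Defs.
From Stdlib Require Import Reals ZArith Lra.
From Coquelicot Require Import Coquelicot.
Open Scope R_scope.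
Lemma ln_Rp P x g : 0 < P -> ln (P / Rpower x g) = ln P - g * ln x.
Proof. intros HP. unfold Rdiv. rewrite ln_mult; [|lra|].
  rewrite ln_Rinv. rewrite ln_Rpower. ring. unfold Rpower; apply exp_pos.
  apply Rinv_0_lt_compat. unfold Rpower; apply exp_pos. Qed.

Lemma grad_vals g dU0 dU1 dU2 : 1 < g -> is_gradU g dU0 dU1 dU2 -> forall w, inY g w ->
  dU0 w = g - spec_ent g w /\ dU1 w = 0 /\ dU2 w = -(g-1) * (rho w / pres g w).
Proof.
  intros Hg H w Hw. destruct (H w Hw) as [H0 [H1 H2]].
  destruct Hw as [Hr Hp]. unfold pres in *.
  unfold Uent, spec_ent, pres in *; simpl in *.
  assert (0 < ener w) by (apply Rmult_lt_reg_l with (g-1); lra).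
  split; [|split].
  - eapply uniqueness_limite. exact H0.
    eapply derivable_pt_lim_ext with (f := fun x => - x * (ln ((g-1)*ener w) - g * ln x)).
    { intro z. rewrite ln_Rp by exact Hp. reflexivity. }
    apply is_derive_Reals. auto_derive. lra.
    rewrite ln_Rp by exact Hp. field. lra.
  - eapply uniqueness_limite. exact H1. apply is_derive_Reals. auto_derive. easy. ring.
  - eapply uniqueness_limite. exact H2.
    eapply derivable_pt_lim_locally_ext with (a := 0) (b := ener w + 1)
      (f := fun x => - rho w * (ln ((g-1)*x) - g * ln (rho w))).
    + lra.
    + intros z Hz. rewrite ln_Rp. reflexivity. apply Rmult_lt_0_compat; lra.
    + apply is_derive_Reals. auto_derive. apply Rmult_lt_0_compat; lra. field. lra.
Qed.
Lemma logmean_prop a b : 0 < a -> 0 < b -> 0 < logmean a b /\ logmean a b * (ln b - ln a) = b - a.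
Proof.
  intros Ha Hb. unfold logmean. destruct (Req_EM_T a b) as [E|E].
  - subst. split; [lra|ring].
  - destruct (Rlt_or_le a b) as [L|L].
    + pose proof (ln_increasing a b Ha L). split.
      apply Rdiv_lt_0_compat; lra. field. lra.
    + assert (b < a) by lra. pose proof (ln_increasing b a Hb H). split.
      replace ((b - a) / (ln b - ln a)) with ((a-b)/(ln a - ln b)) by (field; lra).
      apply Rdiv_lt_0_compat; lra. field. lra.
Qed.
Lemma mono_ln a b : 0 < a -> 0 < b -> 0 <= (b - a) * (ln b - ln a).
Proof. intros Ha Hb. destruct (Rlt_or_le a b) as [L|L].
  pose proof (ln_increasing a b Ha L). nra.
  destruct (Req_dec a b). subst; nra. assert (b<a) by lra. pose proof (ln_increasing b a Hb H0). nra. Qed.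
Lemma sgn_pos V : 0 <= sgn V * V.
Proof. unfold sgn. destruct (Rlt_dec 0 V); [lra|]. destruct (Rlt_dec V 0); lra. Qed.

Lemma Dneg (g ra rb pa pb V Lr Lq lra lrb lpa lpb s : R) :
 1 < g -> 0 < pa -> 0 < pb -> 0 < Lq ->
 Lr * (lrb - lra) = rb - ra ->
 rb / pb - ra / pa = Lq * ((lrb - lpb) - (lra - lpa)) ->
 0 <= (rb - ra) * (lrb - lra) -> 0 <= s * V ->
 ((g - (lpb - g*lrb)) - (g - (lpa - g*lra))) * ((Lr - /2*(rb-ra)*s)*V)
 + ((-(g-1)*(rb/pb)) - (-(g-1)*(ra/pa))) *
     (/(g-1) * (((Lr - /2*(rb-ra)*s)*V) / Lq) + avg pa pb * V)
 + ((-(g-1)*(ra/pa)) + (-(g-1)*(rb/pb)))/2 * V * (pb - pa) <= 0.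
Proof.
  intros Hg Hpa Hpb HLq H1 H2 H3 H4. unfold avg.
  set (f := (Lr - /2*(rb-ra)*s)*V).
  match goal with |- ?D <= 0 => assert (E : D = (g-1)*(f*(lrb-lra) - (rb-ra)*V)
     + f*(((lrb - lpb) - (lra - lpa)) - (rb/pb - ra/pa)/Lq)) end.
  { field. repeat split; lra. }
  rewrite E, H2. clear E.
  replace (Lq * (lrb - lpb - (lra - lpa)) / Lq) with (lrb - lpb - (lra - lpa)) by (field; lra).
  assert (E2 : f*(lrb-lra) - (rb-ra)*V = -/2*((rb-ra)*(lrb-lra))*(s*V)).
  { unfold f. transitivity (V*(Lr*(lrb-lra) - (rb-ra)) - /2*((rb-ra)*(lrb-lra))*(s*V)). ring.
    rewrite H1. ring. }
  rewrite E2. assert (0 <= ((rb-ra)*(lrb-lra))*(s*V)) by (apply Rmult_le_pos; auto).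
  nra.
Qed.

Definition W0 g w := g - (ln (pres g w) - g * ln (rho w)).
Definition W2 g w := -(g-1) * (rho w / pres g w).
Definition Dif g beta a b := (W0 g b - W0 g a) * frho g beta a b + (W2 g b - W2 g a) * fener g beta a b
  + (W2 g a + W2 g b) / 2 * Vint g beta a b * (pres g b - pres g a).

Lemma Dif_neg g beta a b : 1 < g -> inY g a -> inY g b -> Dif g beta a b <= 0.
Proof.
  intros Hg [Ha1 Ha2] [Hb1 Hb2].
  destruct (logmean_prop _ _ Ha1 Hb1) as [_ HL1].
  assert (Hqa : 0 < rho a / pres g a) by (apply Rdiv_lt_0_compat; lra).
  assert (Hqb : 0 < rho b / pres g b) by (apply Rdiv_lt_0_compat; lra).
  destruct (logmean_prop _ _ Hqa Hqb) as [HLq HL2].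
  unfold Dif, W0, W2, frho, fener, jump.
  apply Dneg; auto.
  - rewrite <- HL2. unfold Rdiv. rewrite !ln_mult, !ln_Rinv; try lra; try (apply Rinv_0_lt_compat; lra).
  - apply mono_ln; auto.
  - apply sgn_pos.
Qed.

Definition Fnum g beta a b := avg (W0 g a) (W0 g b) * frho g beta a b
  + avg (W2 g a) (W2 g b) * fener g beta a b
  + (W2 g b - W2 g a) * Vint g beta a b * jump (pres g a) (pres g b) / 4.

Theorem mainTheorem13 (gamma : R) (hgamma : 1 < gamma)
  (beta frv rnum : state -> state -> R)
  (hbeta : forall um up, inY gamma um -> inY gamma up -> 0 <= beta um up)
  (hfrv : forall w, inY gamma w -> frv w w = rho w * vel w ^ 2 + pres gamma w)
  (hrnum : forall w, inY gamma w -> rnum w w = rho w)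
  (dU0 dU1 dU2 : state -> R) (hdU : is_gradU gamma dU0 dU1 dU2) :
  exists Fnum : state -> state -> R,
    (forall w, inY gamma w -> Fnum w w = Fent gamma w) /\
    forall (u : Z -> state) (phi : Z -> R) (dx : R),
      0 < dx -> (forall j, inY gamma (u j)) ->
      forall i : Z,
        dU0 (u i) * dt_rho gamma beta u dx i
        + dU1 (u i) * dt_mom frv rnum u phi dx i
        + dU2 (u i) * dt_ener gamma beta u dx i
        <= - / dx * (Fnum (u i) (u (i+1)%Z) - Fnum (u (i-1)%Z) (u i)).
Proof.
  exists (Fnum gamma beta). split.
  - intros w [Hr Hp]. unfold Fnum, Fent, fener, frho, Vint, logmean, jump, avg, W0, W2, spec_ent, vel.
    rewrite ln_Rp by exact Hp.
    destruct (Req_EM_T (rho w) (rho w)) as [_|C]; [|congruence].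
    destruct (Req_EM_T (rho w / pres gamma w) (rho w / pres gamma w)) as [_|C]; [|congruence].
    field. repeat split; lra.
  - intros u phi dx Hdx HY i.
    destruct (grad_vals _ _ _ _ hgamma hdU (u i) (HY i)) as [E0 [E1 E2]].
    rewrite E0, E1, E2, Rmult_0_l, Rplus_0_r.
    unfold spec_ent. rewrite ln_Rp by (apply (HY i)).
    pose proof (Dif_neg gamma beta _ _ hgamma (HY i) (HY (i+1)%Z)) as DR.
    pose proof (Dif_neg gamma beta _ _ hgamma (HY (i-1)%Z) (HY i)) as DL.
    assert (Hp : 0 < pres gamma (u i)) by apply (HY i).
    unfold Dif in DR, DL. unfold dt_rho, dt_ener, vnum, Fnum, jump, avg.
    unfold W0, W2 in *.
    set (a := u (i-1)%Z) in *. set (b := u i) in *. set (c := u (i+1)%Z) in *.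
    set (fR := frho gamma beta b c) in *. set (fL := frho gamma beta a b) in *.
    set (gR := fener gamma beta b c) in *. set (gL := fener gamma beta a b) in *.
    set (VR := Vint gamma beta b c) in *. set (VL := Vint gamma beta a b) in *.
    match type of DR with ?XR <= 0 => match type of DL with ?XL <= 0 =>
    match goal with |- ?L <= ?Rr => assert (E : L = Rr + / dx * ((XR + XL) / 2)) end end end.
    { assert (0 < pres gamma a) by apply HY. assert (0 < pres gamma c) by apply HY.
      field. repeat split; lra. }
    rewrite E. clear E.
    assert (0 < / dx) by (apply Rinv_0_lt_compat; lra).
    match goal with |- _ + / dx * ?Z <= _ => assert (Z <= 0) by lra;
      assert (/ dx * Z <= 0) by nra end.
    lra.
Qed.
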